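(* For $v\in\mathbb R$ consider the stationary phase points, i.e. the zeros of the polynomial $12\prod_{k=0}^g(z-\tilde\lambda_k)+v\prod_{k=1}^g(z-\lambda_k)$, denoted $z_j(v)$, $0\le j\le g$. Set $\lambda_0=-\infty$ and $\lambda_{g+1}=\infty$. Then (with suitable labelling) $\lambda_j<z_j(v)<\lambda_{j+1}$, and there is always at least one stationary phase point in each spectral gap. Moreover, each $z_j(v)$ is strictly decreasing in $v$ with $\lim_{v\to-\infty}z_j(v)=\lambda_{j+1}$ and $\lim_{v\to\infty}z_j(v)=\lambda_j$.
   Context: Fix $g\in\mathbb N_0$ and real $E_0<E_1<\dots<E_{2g}$; $R_{2g+1}^{1/2}(z)=\mathrm i\prod_{j=0}^{2g}\sqrt{z-E_j}$ defines the hyperelliptic Riemann surface $\mathcal K_g$, with spectrum $\sigma=\bigcup_{j=0}^{g-1}[E_{2j},E_{2j+1}]\cup[E_{2g},\infty)$ and spectral gaps $(E_{2j-1},E_{2j})$, $1\le j\le g$. The numbers $\lambda_j$ ($1\le j\le g$) and $\tilde\lambda_j$ ($0\le j\le g$) are defined by requiring that $\omega_{p_\infty,0}=\frac1{2\mathrm i}\frac{\prod_{j=1}^g(\pi-\lambda_j)}{R_{2g+1}^{1/2}}d\pi$ and $\omega_{p_\infty,2}=\frac1{2\mathrm i}\frac{\prod_{j=0}^g(\pi-\tilde\lambda_j)}{R_{2g+1}^{1/2}}d\pi$ have vanishing $a$-periods (the $a_j$ cycle encircles the $j$-th gap changing sheets), with $\sum_{j=0}^g\tilde\lambda_j=\frac12\sum_{j=0}^{2g}E_j$;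 they are real, $\lambda_j$ and $\tilde\lambda_j$ ($j\ge1$) lie in the $j$-th gap. The stationary phase points are the zeros of $\phi'$ for the phase $\phi(p)=-24\mathrm i\int^p\omega_{p_\infty,2}-2\mathrm iv\int^p\omega_{p_\infty,0}$. *)

(* Defs.v *)
From HB Require Import structures.
From mathcomp Require Import all_boot all_order all_algebra.
From mathcomp Require Import all_classical all_reals all_analysis.
Set Implicit Arguments. Unset Strict Implicit. Unset Printing Implicit Defensive.
Import Order.TTheory GRing.Theory Num.Theory.
Import numFieldNormedType.Exports.
Local Open Scope classical_set_scope.
Local Open Scope ring_scope.

Definition Eprod {R : realType} (g : nat) (E : nat -> R) (x : R) : R :=
  \prod_(0 <= i < (2 * g).+1) (x - E i).

Definition lamprod {R : realType} (g : nat) (lam : nat -> R) (x : R) : R :=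
  \prod_(1 <= k < g.+1) (x - lam k).

Definition tlamprod {R : realType} (g : nat) (tlam : nat -> R) (x : R) : R :=
  \prod_(0 <= k < g.+1) (x - tlam k).

(* Vanishing of the a_j-period (1 <= j <= g) of the differential
   (1/2i) p(pi) / R_{2g+1}^{1/2}(pi) d pi.  The cycle a_j encircles the
   j-th gap (E_{2j-1}, E_{2j}) changing sheets, so the a_j-period equals a
   nonzero constant times the (absolutely convergent, improper) real integral
   int_{E_{2j-1}}^{E_{2j}} p(x) / sqrt|prod_k (x - E_k)| dx
   (on the gap R_{2g+1}^{1/2} is, up to a constant unimodular factor, the
   real quantity sqrt|prod (x-E_k)|). *)
Definition a_period_vanishes {R : realType} (g : nat) (E : nat -> R)
    (p : R -> R) (j : nat) : Prop :=
  let f := fun x : R => p x / Num.sqrt `|Eprod g E x| in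
  (@lebesgue_measure R).-integrable `]E (2 * j).-1, E (2 * j)[ (EFin \o f) /\
  let a := E (2 * j).-1%N in let b := E (2 * j)%N in
  (\int[@lebesgue_measure R]_(x in `]a, b[) (f x)%:E = 0)%E.

Definition lambdas_def {R : realType} (g : nat) (E : nat -> R)
    (lam tlam : nat -> R) : Prop :=
  [/\ forall j, (1 <= j <= g)%N -> a_period_vanishes g E (lamprod g lam) j,
      forall j, (1 <= j <= g)%N -> a_period_vanishes g E (tlamprod g tlam) j
    & \sum_(0 <= k < g.+1) tlam k = 2^-1 * \sum_(0 <= k < (2 * g).+1) E k].

Definition statpoly {R : realType} (g : nat) (lam tlam : nat -> R) (v z : R) : R :=
  12 * tlamprod g tlam z + v * lamprod g lam z.

(* Main.v *)
Require Import Defs.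
From HB Require Import structures.
From mathcomp Require Import all_boot all_order all_algebra.
From mathcomp Require Import all_classical all_reals all_analysis.
From mathcomp Require Import polyrcf.
Import Order.TTheory GRing.Theory Num.Theory.
Import numFieldNormedType.Exports.
Local Open Scope classical_set_scope.
Local Open Scope ring_scope.
From mathcomp Require Import zify.
From mathcomp Require Import ring lra.
Lemma KA {R : realType} {a b x0 : R} {f : R -> R} : a < b ->
  (@lebesgue_measure R).-integrable `]a, b[ (EFin \o f) ->
  (forall x, a < x < b -> 0 <= f x) ->
  (forall x, a < x < b -> x != x0 -> 0 < f x) ->
  (\int[@lebesgue_measure R]_(x in `]a, b[) (f x)%:E = 0)%E -> False.
Proof.
move=> ab fi f0 fp I0.
have mD : measurable (`]a, b[ : set R) by exact: measurable_itv.
have mf := measurable_int _ fi.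
have : (\int[@lebesgue_measure R]_(x in `]a, b[) `|(EFin \o f) x| = 0)%E.
  rewrite -I0; apply: eq_integral => x; rewrite inE /= in_itv /= => /f0 h.
  by rewrite /= ger0_norm.
move=> HI; have := (@ae_eq_integral_abs _ _ _ (@lebesgue_measure R) _ (measurable_itv _) _ mf).1 HI.
case=> N [mN N0 sub].
pose m := if (a < x0 < b) then x0 else b.
have am : a < m by rewrite /m; case: ifP => [/andP[]|]//.
have mb : m <= b by rewrite /m; case: ifP => [/andP[_ /ltW]|]//.
have sub2 : `]a, m[%classic `<=` N.
  move=> x /=; rewrite in_itv /= => /andP[ax xm]; apply: sub => /= /(_ _).
  have xb : x < b by apply: lt_le_trans mb.
  have: `]a, b[%classic x by rewrite /= in_itv /= ax xb.
  move=> H /(_ H) /eqP; rewrite /= eqe; apply/negP/lt0r_neq0/fp; first by rewrite ax.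
  apply/eqP => xx0; move: xm; rewrite /m xx0; case: ifP => [_|/negbT]; first by rewrite ltxx.
  by rewrite -xx0 ax xb.
have mN' : N \in measurable by rewrite inE.
have mI : `]a, m[%classic \in measurable by rewrite inE; exact: measurable_itv.
have N0R : (@lebesgue_measure R) N = 0 := N0.
have LE : (@lebesgue_measure R `]a,m[%classic <= @lebesgue_measure R N)%E :=
  le_measure (@lebesgue_measure R) mI mN' sub2.
move: LE; rewrite N0R.
rewrite lebesgue_measure_itv /= lte_fin am lee_fin subr_le0 => /(lt_le_trans am).
by rewrite ltxx.
Qed.
Section Main.
Variable R : realType.
Variables (g : nat) (E lam tlam : nat -> R).
Hypothesis HE : forall i, (i < 2 * g)%N -> E i < E i.+1.
Hypothesis Hdef : lambdas_def g E lam tlam.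
Hypothesis Hgap : forall j, (1 <= j <= g)%N ->
     E (2 * j).-1 < lam j < E (2 * j)%N /\ E (2 * j).-1 < tlam j < E (2 * j)%N.

Definition Tp : {poly R} := \prod_(0 <= k < g.+1) ('X - (tlam k)%:P).
Definition Lp : {poly R} := \prod_(1 <= k < g.+1) ('X - (lam k)%:P).
Definition gap k x := E (2 * k).-1 < x < E (2 * k)%N.
Definition wt x := Num.sqrt `|Eprod g E x|.

Lemma E_le i j : (i <= j <= 2 * g)%N -> E i <= E j.
Proof.
move=> /andP[ij jg]; elim: j ij jg => [|j IH]; first by rewrite leqn0 => /eqP ->.
rewrite leq_eqVlt => /orP[/eqP -> //|ij1] jg.
apply: le_trans (IH ij1 (ltnW jg)) _; exact/ltW/HE.
Qed.

Lemma E_lt i j : (i < j <= 2 * g)%N -> E i < E j.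
Proof.
move=> /andP[ij jg]; apply: lt_le_trans (HE _ _) (E_le _ _ _).
  exact: leq_trans ij jg.
by rewrite ij jg.
Qed.

Lemma gap_lt i j x y : (1 <= i)%N -> (i < j <= g)%N -> gap i x -> gap j y -> x < y.
Proof.
move=> i1 /andP[ij jg] /andP[_ xi] /andP[yj _].
apply: lt_trans xi (le_lt_trans _ yj); apply: E_le.
apply/andP; split; first by lia.
lia.
Qed.

Lemma lam_gap j : (1 <= j <= g)%N -> gap j (lam j).
Proof. by move/Hgap => [h _]. Qed.

Lemma lam_lt i j : (1 <= i)%N -> (i < j <= g)%N -> lam i < lam j.
Proof.
move=> i1 ij; apply: (@gap_lt i j _ _ i1 ij); apply: lam_gap.
  by move: ij => /andP[]; lia.
by move: ij => /andP[]; lia.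
Qed.

Lemma lam_le i j : (1 <= i)%N -> (i <= j <= g)%N -> lam i <= lam j.
Proof.
move=> i1 /andP[]; rewrite leq_eqVlt => /orP[/eqP -> //|ij] jg.
by apply/ltW/lam_lt => //; rewrite ij.
Qed.

Lemma hornerT x : Tp.[x] = tlamprod g tlam x.
Proof. by rewrite /Tp horner_prod; apply: eq_bigr => i _; rewrite hornerXsubC. Qed.

Lemma hornerL x : Lp.[x] = lamprod g lam x.
Proof. by rewrite /Lp horner_prod; apply: eq_bigr => i _; rewrite hornerXsubC. Qed.

Lemma Tp_monic : Tp \is monic.
Proof. exact: monic_prod_XsubC. Qed.
Lemma Lp_monic : Lp \is monic.
Proof. exact: monic_prod_XsubC. Qed.
Lemma size_Tp : size Tp = g.+2.
Proof. by rewrite /Tp size_prod_XsubC size_iota subn0. Qed.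
Lemma size_Lp : size Lp = g.+1.
Proof. by rewrite /Lp size_prod_XsubC size_iota subn1. Qed.

Lemma wt_gt0 {k x} : (1 <= k <= g)%N -> gap k x -> 0 < wt x.
Proof.
move=> kg /andP[a b]; rewrite /wt sqrtr_gt0 normr_gt0 /Eprod.
rewrite prodf_seq_neq0; apply/allP => i; rewrite mem_index_iota => /andP[_ i2] /=.
rewrite subr_eq0; have [ik|ik] := leqP i (2 * k).-1.
  apply/eqP => xE; move: a; rewrite xE; apply/negP; rewrite -leNgt; apply: E_le; lia.
apply/eqP => xE; move: b; rewrite xE; apply/negP; rewrite -leNgt; apply: E_le; lia.
Qed.

Definition pen (P : {poly R}) := exists a b, P = a *: Tp + b *: Lp.

Lemma penN {P} : pen P -> pen (- P).
Proof. by move=> [a [b ->]]; exists (- a), (- b); rewrite opprD !scaleNr. Qed.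

Lemma pen_period {P k} : pen P -> (1 <= k <= g)%N ->
  (@lebesgue_measure R).-integrable `]E (2 * k).-1, E (2 * k)[
     (EFin \o (fun x => P.[x] / wt x)) /\
  (\int[@lebesgue_measure R]_(x in `]E (2 * k).-1, E (2 * k)[)
      (P.[x] / wt x)%:E = 0)%E.
Proof.
move=> [a [b ->]] kg; case: Hdef => HL HT _.
have [iL IL] := HL k kg; have [iT IT] := HT k kg.
set fT := fun x => tlamprod g tlam x / Num.sqrt `|Eprod g E x|.
set fL := fun x => lamprod g lam x / Num.sqrt `|Eprod g E x|.
have eqf : EFin \o (fun x => (a *: Tp + b *: Lp).[x] / wt x) =
    ((fun x => a%:E * (EFin \o fT) x) \+ (fun x => b%:E * (EFin \o fL) x))%E.
  apply/funext => x /=; rewrite hornerD !hornerZ hornerT hornerL /fT /fL /wt.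
  by rewrite -!EFinM -EFinD mulrDl !mulrA.
have mD : measurable (`]E (2 * k).-1, E (2 * k)[ : set R) by exact: measurable_itv.
rewrite eqf; split.
  by apply: integrableD => //; apply: integrableZl.
rewrite (_ : (fun x => _) = (fun x => a%:E * (EFin \o fT) x + b%:E * (EFin \o fL) x)%E); last first.
  by apply/funext => x; have := congr1 (fun f => f x) eqf.
rewrite integralD //; try by apply: integrableZl.
by rewrite !integralZl //= ?IT ?IL ?mule0 ?adde0.
Qed.
Lemma SC (S : {poly R}) a b : a < b -> (forall x, a < x < b -> S.[x] != 0) ->
  (forall x, a < x < b -> 0 < S.[x]) \/ (forall x, a < x < b -> S.[x] < 0).
Proof.
move=> ab nz.
have H := @polyrN0_itv R `]a, b[ S.
have nr : {in `]a, b[, forall x, ~~ root S x}.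
  by move=> x; rewrite in_itv /= => /nz; rewrite rootE.
have mI := mid_in_itvoo ab.
have xI x : a < x < b -> x \in `]a, b[ by rewrite in_itv.
have Sm : S.[(a + b) / 2] != 0 by apply: nr.
case: (ltrgtP S.[(a + b) / 2] 0) => [neg|pos|z]; last by rewrite z eqxx in Sm.
  right => x /xI xab; have := H nr _ _ mI xab.
  by rewrite (ltr0_sg neg) => /eqP; rewrite sgr_cp0.
left => x /xI xab; have := H nr _ _ mI xab.
by rewrite (gtr0_sg pos) => /eqP; rewrite sgr_cp0.
Qed.

Lemma gap_ab {k} : (1 <= k <= g)%N -> E (2 * k).-1 < E (2 * k).
Proof. move=> kg; apply: E_lt; lia. Qed.

Lemma GapRoot {P k} : pen P -> P != 0 -> (1 <= k <= g)%N ->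
  exists2 y, gap k y & P.[y] = 0.
Proof.
move=> pP P0 kg.
case: (pselect (exists2 y, gap k y & P.[y] = 0)) => // H; exfalso.
have nz x : E (2 * k).-1 < x < E (2 * k) -> P.[x] != 0.
  by move=> xg; apply/eqP => Px; apply: H; exists x.
case: (@SC P _ _ (gap_ab kg) nz) => [pos|neg].
  have [iP IP] := pen_period pP kg.
  apply: (KA (x0 := E (2 * k)) (gap_ab kg) iP _ _ IP) => [x xg|x xg _].
    by apply/ltW/divr_gt0; [exact: pos|exact: (wt_gt0 kg xg)].
  by apply/divr_gt0; [exact: pos|exact: (wt_gt0 kg xg)].
have [iP IP] := pen_period (penN pP) kg.
apply: (KA (x0 := E (2 * k)) (gap_ab kg) iP _ _ IP) => [x xg|x xg _].
  by apply/ltW/divr_gt0; [rewrite hornerN oppr_gt0; exact: neg|exact: (wt_gt0 kg xg)].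
by apply/divr_gt0; [rewrite hornerN oppr_gt0; exact: neg|exact: (wt_gt0 kg xg)].
Qed.
Lemma NR (S : {poly R}) : S != 0 -> (size S <= g)%N ->
  (forall k, (1 <= k <= g)%N -> exists2 y, gap k y & S.[y] = 0) -> False.
Proof.
move=> S0 sS H.
have H' : forall k, exists y, (1 <= k <= g)%N -> gap k y /\ S.[y] = 0.
  move=> k; case: (boolP (1 <= k <= g)%N) => kg; last by exists 0.
  by have [y ? ?] := H k kg; exists y.
case: (choice H') => yf Hy.
have [r u] : all (root S) (map yf (iota 1 g)) /\ uniq (map yf (iota 1 g)).
  split.
    apply/allP => y /mapP [k]; rewrite mem_iota => kI ->.
    rewrite rootE; have [|_ ->] := Hy k; first by lia.
    by [].
  rewrite map_inj_in_uniq ?iota_uniq // => i j; rewrite !mem_iota => iI jI eq.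
  case: (ltngtP i j) => // ij; exfalso.
    have [|gi _] := Hy i; first by lia.
    have [|gj _] := Hy j; first by lia.
    by have := @gap_lt i j (yf i) (yf j) ltac:(lia) ltac:(lia) gi gj; rewrite eq ltxx.
  have [|gi _] := Hy i; first by lia.
  have [|gj _] := Hy j; first by lia.
  by have := @gap_lt j i (yf j) (yf i) ltac:(lia) ltac:(lia) gj gi; rewrite eq ltxx.
have := max_poly_roots S0 r u; rewrite size_map size_iota => h.
by move: sS; rewrite leqNgt h.
Qed.

Lemma DR P x0 : pen P -> size P = g.+2 -> P.[x0] = 0 -> P^`().[x0] = 0 -> False.
Proof.
move=> pP sP Px0 Pd.
have P0 : P != 0 by rewrite -size_poly_eq0 sP.
have /factor_theorem [Q PQ] : root P x0 by rewrite rootE; apply/eqP.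
have Qx0 : Q.[x0] = 0.
  move: Pd; rewrite PQ derivM derivXsubC hornerD !hornerM hornerXsubC subrr.
  by rewrite mulr0 add0r hornerC mulr1.
have /factor_theorem [S QS] : root Q x0 by rewrite rootE; apply/eqP.
have PS : P = S * ('X - x0%:P) ^+ 2 by rewrite PQ QS expr2 mulrA.
have S0 : S != 0 by apply: contraNneq P0 => S0; rewrite PS S0 mul0r.
have sS : size S = g.
  move: sP; rewrite PS size_Mmonic // ?monic_exp ?monicXsubC //.
  by rewrite size_exp_XsubC addnS /= addn2 => -[].
have hP x : P.[x] = S.[x] * (x - x0) ^+ 2 by rewrite PS hornerM horner_exp hornerXsubC.
apply: (@NR S S0); first by rewrite sS.
move=> k kg; case: (pselect (exists2 y, gap k y & S.[y] = 0)) => // H; exfalso.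
have nz x : E (2 * k).-1 < x < E (2 * k) -> S.[x] != 0.
  by move=> xg; apply/eqP => Sx; apply: H; exists x.
case: (pselect (gap k x0)) => gx0.
  case: (@SC S _ _ (gap_ab kg) nz) => [pos|neg].
    have [iP IP] := pen_period pP kg.
    apply: (KA (x0 := x0) (gap_ab kg) iP _ _ IP) => [x xg|x xg xx0].
      apply/divr_ge0; last exact/ltW/(wt_gt0 kg xg).
      by rewrite hP mulr_ge0 // ?sqr_ge0 // ltW // pos.
    apply/divr_gt0; last exact: (wt_gt0 kg xg).
    by rewrite hP mulr_gt0 ?pos // lt_def sqr_ge0 andbT sqrf_eq0 subr_eq0.
  have [iP IP] := pen_period (penN pP) kg.
  apply: (KA (x0 := x0) (gap_ab kg) iP _ _ IP) => [x xg|x xg xx0].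
    apply/divr_ge0; last exact/ltW/(wt_gt0 kg xg).
    by rewrite hornerN hP -mulNr mulr_ge0 // ?sqr_ge0 // oppr_ge0 ltW // neg.
  apply/divr_gt0; last exact: (wt_gt0 kg xg).
  rewrite hornerN hP -mulNr mulr_gt0 ?oppr_gt0 ?neg //.
  by rewrite lt_def sqr_ge0 andbT sqrf_eq0 subr_eq0.
have [y gy Py] := GapRoot pP P0 kg.
move: Py; rewrite hP => /eqP; rewrite mulf_eq0 expf_eq0 /= subr_eq0 => /orP[/eqP Sy|/eqP yx0].
  by apply: H; exists y.
by apply: gx0; rewrite -yx0.
Qed.
Definition Wp := Tp^`() * Lp - Tp * Lp^`().
Definition Mp k := \prod_(i <- index_iota 1 g.+1 | i != k) ('X - (lam i)%:P).

Lemma Lp_neq0 : Lp != 0.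
Proof. by rewrite -size_poly_eq0 size_Lp. Qed.

Lemma size_pen a b : a != 0 -> size (a *: Tp + b *: Lp) = g.+2.
Proof.
move=> a0; have h := size_scale_leq b Lp; rewrite size_Lp in h.
have hT : size (a *: Tp) = g.+2 by rewrite size_scale // size_Tp.
rewrite size_addl hT //; lia.
Qed.

Lemma L_split {k} : (1 <= k <= g)%N -> Lp = ('X - (lam k)%:P) * Mp k.
Proof.
move=> kg; rewrite /Lp (bigD1_seq k) //= ?iota_uniq // mem_index_iota; lia.
Qed.

Lemma L_root {k} : (1 <= k <= g)%N -> Lp.[lam k] = 0.
Proof. by move=> kg; rewrite (L_split kg) hornerM hornerXsubC subrr mul0r. Qed.

Lemma L_der {k} : (1 <= k <= g)%N -> Lp^`().[lam k] = (Mp k).[lam k].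
Proof.
move=> kg; rewrite (L_split kg) derivM derivXsubC hornerD !hornerM hornerXsubC.
by rewrite subrr mul0r addr0 hornerC mul1r.
Qed.

Lemma neg_prod (s : seq nat) (P : pred nat) (F : nat -> R) :
  (forall i, i \in s -> P i -> F i < 0) ->
  0 < (-1) ^+ (count P s) * \prod_(i <- s | P i) F i.
Proof.
elim: s => [|a s IH] H; first by rewrite big_nil mulr1 expr0.
rewrite big_cons /=; case: (boolP (P a)) => Pa /=.
  rewrite add1n (_ : forall n (x y : R), (-1) ^+ n.+1 * (x * y) = - x * ((-1) ^+ n * y)); last first.
    by move=> n x y; rewrite exprS; ring.
  apply: mulr_gt0.
    by rewrite oppr_gt0; apply: H; rewrite ?mem_head.
  by apply: IH => i iS; apply: H; rewrite in_cons iS orbT.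
by rewrite add0n; apply: IH => i iS; apply: H; rewrite in_cons iS orbT.
Qed.

Lemma M_sign {k} : (1 <= k <= g)%N -> 0 < (-1) ^+ (g - k) * (Mp k).[lam k].
Proof.
move=> kg; rewrite /Mp horner_prod.
have -> : index_iota 1 g.+1 = iota 1 k.-1 ++ k :: iota k.+1 (g - k).
  rewrite /index_iota subn1 /=.
  have -> : g = (k.-1 + (g - k).+1)%N by lia.
  rewrite iotaD; congr (_ ++ _); rewrite /= (_ : (1 + k.-1)%N = k) //; try lia.
  by congr (_ :: iota _ _); lia.
rewrite big_cat big_cons /= eqxx /= mulrCA; apply: mulr_gt0.
  rewrite big_seq_cond; apply: prodr_gt0 => i /andP[]; rewrite mem_iota => iI _.
  rewrite hornerXsubC subr_gt0; apply: lam_lt; lia.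
have := @neg_prod (iota k.+1 (g - k)) (fun i => i != k) (fun i => ('X - (lam i)%:P).[lam k]).
rewrite (@eq_in_count _ _ predT) ?count_predT ?size_iota; last first.
  by move=> i; rewrite mem_iota /=; lia.
rewrite (eq_bigr (fun i => ('X - (lam i)%:P).[lam k])) //.
apply => i; rewrite mem_iota => iI _; rewrite hornerXsubC subr_lt0; apply: lam_lt; lia.
Qed.

Lemma M_neq0 {k} : (1 <= k <= g)%N -> (Mp k).[lam k] != 0.
Proof.
move=> /M_sign; apply: contraTneq => ->; by rewrite mulr0 ltxx.
Qed.
Lemma deriv_size2 (q : {poly R}) : size q = 2%N -> q^`() = (lead_coef q)%:P.
Proof.
move=> sq; apply/polyP => i; rewrite coef_deriv coefC; case: i => [|i] /=.
  by rewrite mulr1n lead_coefE sq.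
by rewrite nth_default ?mul0rn // sq.
Qed.

Lemma W_lead : lead_coef Wp = 1.
Proof.
have [q [r [Td sr]]] : exists q r, Tp = q * Lp + r /\ (size r < g.+1)%N.
  exists (Tp %/ Lp), (Tp %% Lp); split; first exact: divp_eq.
  by rewrite -size_Lp ltn_modp Lp_neq0.
have qL : q * Lp = Tp - r by rewrite Td addrK.
have sqL : size (q * Lp) = g.+2.
  by rewrite qL size_addl ?size_Tp // size_opp (ltn_trans sr).
have lqL : lead_coef (q * Lp) = 1.
  rewrite qL lead_coefDl ?size_Tp ?size_opp; last exact: (ltn_trans sr).
  exact/monicP/Tp_monic.
have q0 : q != 0 by apply/eqP => q0; move: sqL; rewrite q0 mul0r size_poly0.
have sq : size q = 2%N.
  move: sqL; rewrite size_Mmonic ?Lp_monic // size_Lp addnS /= => h.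
  lia.
have lq : lead_coef q = 1.
  by move: lqL; rewrite lead_coefM (monicP Lp_monic) mulr1.
have dq : q^`() = 1 by rewrite deriv_size2 // lq.
have eqW : Wp = Lp * Lp + (r^`() * Lp - r * Lp^`()).
  by rewrite /Wp Td derivD derivM dq; ring.
have sLL : size (Lp * Lp) = (g + g).+1.
  by rewrite size_Mmonic ?Lp_monic ?Lp_neq0 // size_Lp addSn addnS.
rewrite eqW lead_coefDl; first by rewrite lead_coefM (monicP Lp_monic) mulr1.
rewrite sLL; apply: leq_ltn_trans (size_add _ _) _; rewrite size_opp.
have h1 := size_mul_leq r^`() Lp; have h2 := size_mul_leq r Lp^`().
rewrite polyorder.size_deriv size_Lp in h1; rewrite polyorder.size_deriv size_Lp /= in h2.
rewrite gtn_max; apply/andP; split.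
  apply: leq_ltn_trans h1 _; case: (size r) sr => [|s] /=; lia.
apply: leq_ltn_trans h2 _; case: (size r) sr => [|s] /=; lia.
Qed.

Lemma L_zero {x} : Lp.[x] = 0 -> exists2 k, (1 <= k <= g)%N & x = lam k.
Proof.
rewrite /Lp horner_prod => /eqP; rewrite prodf_seq_eq0 => /hasP [k].
rewrite mem_index_iota /= hornerXsubC subr_eq0 => kI /eqP ->; exists k => //; lia.
Qed.

Lemma W_neq0 x : Wp.[x] != 0.
Proof.
apply/eqP => W0.
have Wx : Wp.[x] = Tp^`().[x] * Lp.[x] - Tp.[x] * Lp^`().[x].
  by rewrite /Wp hornerD hornerN !hornerM.
have hd a b : (a *: Tp + b *: Lp)^`().[x] = a * Tp^`().[x] + b * Lp^`().[x].
  by rewrite derivD !derivZ hornerD !hornerZ.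
have he a b : (a *: Tp + b *: Lp).[x] = a * Tp.[x] + b * Lp.[x].
  by rewrite hornerD !hornerZ.
case: (eqVneq Lp.[x] 0) => Lx.
  have [k kg xk] := L_zero Lx.
  have L'x : Lp^`().[x] != 0 by rewrite xk L_der // M_neq0.
  have Tx : Tp.[x] = 0.
    move: W0; rewrite Wx Lx mulr0 sub0r => /eqP; rewrite oppr_eq0 mulf_eq0.
    by rewrite (negPf L'x) orbF => /eqP.
  apply: (@DR (Lp^`().[x] *: Tp + (- Tp^`().[x]) *: Lp) x).
  - by exists (Lp^`().[x]), (- Tp^`().[x]).
  - exact: size_pen.
  - by rewrite he Tx Lx !mulr0 addr0.
  - by rewrite hd mulrC mulNr addrN.
apply: (@DR (Lp.[x] *: Tp + (- Tp.[x]) *: Lp) x).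
- by exists (Lp.[x]), (- Tp.[x]).
- exact: size_pen.
- by rewrite he mulrC mulNr addrN.
- by rewrite hd -W0 Wx mulrC mulNr.
Qed.

Lemma W_pos x : 0 < Wp.[x].
Proof.
have [n Hn] := @poly_pinfty_gt_lc R Wp (ltac:(by rewrite W_lead ltr01)).
have Wn : 0 < Wp.[n] by apply: lt_le_trans (Hn n (lexx n)); rewrite W_lead.
have nr : {in `]-oo, +oo[, forall y, ~~ root Wp y} by move=> y _; rewrite rootE W_neq0.
have iI (y : R) : y \in `]-oo, +oo[ by rewrite in_itv.
have := @polyrN0_itv R `]-oo, +oo[ Wp nr n x (iI n) (iI x).
by rewrite (gtr0_sg Wn) => /eqP; rewrite sgr_cp0.
Qed.
Lemma sgn_sq n : (-1) ^+ n * (-1) ^+ n = 1 :> R.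
Proof. by rewrite -exprMn mulrNN mulr1 expr1n. Qed.

Lemma T_sign {k} : (1 <= k <= g)%N -> 0 < (-1) ^+ (g - k).+1 * Tp.[lam k].
Proof.
move=> kg; have W := W_pos (lam k).
rewrite /Wp hornerD hornerN !hornerM L_root // L_der // mulr0 sub0r in W.
have M := M_sign kg.
have e : (-1) ^+ (g - k).+1 * Tp.[lam k] * ((-1) ^+ (g - k) * (Mp k).[lam k]) =
   - (Tp.[lam k] * (Mp k).[lam k]).
  have r4 : forall a b c : R, -1 * a * b * (a * c) = - (a * a) * (b * c).
    by move=> a b c; ring.
  by rewrite exprS r4 sgn_sq mulN1r.
by have := W; rewrite -e pmulr_lgt0.
Qed.

Definition Pv v : {poly R} := 12 *: Tp + v *: Lp.

Lemma horner_Pv v x : (Pv v).[x] = statpoly g lam tlam v x.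
Proof. by rewrite /Pv hornerD !hornerZ hornerT hornerL. Qed.

Lemma pen_Pv v : pen (Pv v).
Proof. by exists 12, v. Qed.

Lemma twelve_neq0 : (12 : R) != 0.
Proof. by rewrite pnatr_eq0. Qed.

Lemma size_Pv v : size (Pv v) = g.+2.
Proof. exact: size_pen twelve_neq0. Qed.

Lemma Pv_neq0 v : Pv v != 0.
Proof. by rewrite -size_poly_eq0 size_Pv. Qed.

Lemma lead_Pv v : lead_coef (Pv v) = 12.
Proof.
have hT : size (12 *: Tp) = g.+2 by rewrite size_scale ?twelve_neq0 // size_Tp.
have hL := size_scale_leq v Lp; rewrite size_Lp in hL.
rewrite /Pv lead_coefDl; last by rewrite hT ltnS.
by rewrite lead_coefZ (monicP Tp_monic) mulr1.
Qed.

Lemma sg_pos (a b : R) : Num.sg a = Num.sg b -> b != 0 -> 0 < a * b.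
Proof.
move=> e b0; case: (ltrgtP b 0) => [bn|bp|bz]; last by rewrite bz eqxx in b0.
  by move: e; rewrite (ltr0_sg bn) => /eqP; rewrite sgr_cp0 => an; rewrite nmulr_lgt0.
by move: e; rewrite (gtr0_sg bp) => /eqP; rewrite sgr_cp0 => ap; rewrite pmulr_lgt0.
Qed.

Definition inI k x := ((k == 0%N) || (lam k < x)) && ((g <= k)%N || (x < lam k.+1)).

Lemma root_exists v k : (k <= g)%N -> exists x, inI k x /\ (Pv v).[x] = 0.
Proof.
move=> kg.
set B := cauchy_bound (Pv v).
have B0 : 0 < B := cauchy_bound_gt0 _.
pose a0 := - B - `|lam 1%N|.
pose aG := B + `|lam g|.
have Pa0 : 0 < (-1) ^+ g.+1 * (Pv v).[a0].
  have := @sgp_minftyP R (- B) (Pv v) (le_cauchy_bound (Pv_neq0 v)) a0.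
  rewrite in_itv /= /a0 lerBlDr lerDl normr_ge0 => /(_ isT).
  rewrite /sgp_minfty size_Pv lead_Pv /= => e; rewrite mulrC; apply: sg_pos.
    by rewrite e sgrM [Num.sg 12]gtr0_sg ?mulr1 // sgr_id.
  by rewrite signr_eq0.
have PaG : 0 < (Pv v).[aG].
  have := @sgp_pinftyP R B (Pv v) (ge_cauchy_bound (Pv_neq0 v)) aG.
  rewrite in_itv /= /aG lerDl normr_ge0 andbT => /(_ isT).
  rewrite /sgp_pinfty lead_Pv [Num.sg 12]gtr0_sg // => /eqP; by rewrite sgr_cp0.
pose ep k := if k == 0%N then a0 else if k == g.+1 then aG else lam k.
have sgn j : (j <= g.+1)%N -> 0 < (-1) ^+ (g.+1 - j) * (Pv v).[ep j].
  move=> jg; rewrite /ep; case: eqP => [->|j0]; first by rewrite subn0.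
  case: eqP => [->|jG]; first by rewrite subnn expr0 mul1r.
  have jI : (1 <= j <= g)%N by lia.
  rewrite (_ : (g.+1 - j)%N = (g - j).+1); last by lia.
  rewrite /Pv hornerD !hornerZ L_root // mulr0 addr0 mulrCA.
  by apply: mulr_gt0 => //; apply: T_sign.
have ord : ep k < ep k.+1.
  have n1 := normr_ge0 (lam 1%N); have n2 := ler_norm (- lam 1%N).
  have n3 := ler_norm (lam g); have n4 := normr_ge0 (lam g); rewrite normrN in n2.
  rewrite /ep /=; case: eqP => [k0|k0].
    case: eqP => [g0|g0]; rewrite /a0 /aG; first by lra.
    by rewrite k0; lra.
  case: eqP => [kG|kG]; first lia.
  case: eqP => [[k1G]|k1G]; first by rewrite /aG k1G; lra.
  by apply: lam_lt; lia.
have prod : (Pv v).[ep k] * (Pv v).[ep k.+1] < 0.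
  have s1 := sgn k (ltnW (leq_ltn_trans kg (ltnSn _))).
  have s2 := sgn k.+1 kg.
  rewrite (_ : (g.+1 - k)%N = (g - k).+1) in s1; last by lia.
  rewrite subSS exprS in s2 s1.
  have := mulr_gt0 s1 s2.
  have r4 : forall a b c : R, -1 * a * b * (a * c) = - (a * a) * (b * c).
    by move=> a b c; ring.
  by rewrite r4 sgn_sq mulN1r oppr_gt0.
have [x xI rx] := poly_ivtoo (ltW ord) prod.
exists x; split; last by apply/eqP.
move: xI; rewrite in_itv /= => /andP[l r]; rewrite /inI; apply/andP; split.
  case: eqP => //= k0; move: l; rewrite /ep; case: eqP => // _.
  by case: eqP => // kG; lia.
case: (leqP g k) => //= kg'; move: r; rewrite /ep /=.
by case: eqP => // kG; lia.
Qed.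
Lemma inI_L {k x} : (k <= g)%N -> inI k x -> Lp.[x] != 0.
Proof.
move=> kg /andP[h1 h2]; apply/eqP => /L_zero [i ig xi]; subst x.
case: (leqP i k) => ik.
  have k0 : k != 0%N by lia.
  move: h1; rewrite (negPf k0) /= => h1.
  have := @lam_le i k ltac:(lia) ltac:(lia); rewrite leNgt h1 //.
have kg' : (g <= k)%N = false by apply/negbTE; rewrite -ltnNge; lia.
move: h2; rewrite kg' /= => h2.
have := @lam_le k.+1 i ltac:(lia) ltac:(lia); rewrite leNgt h2 //.
Qed.

Lemma inI_mid {k x y t} : inI k x -> inI k y -> x <= t <= y -> inI k t.
Proof.
move=> /andP[x1 x2] /andP[y1 y2] /andP[xt ty]; apply/andP; split.
  by case/orP: x1 => [->//|h]; apply/orP; right; apply: lt_le_trans h xt.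
by case/orP: y2 => [->//|h]; apply/orP; right; apply: le_lt_trans ty h.
Qed.

Definition F x := Tp.[x] / Lp.[x].

Lemma F_incr {k x y} : (k <= g)%N -> inI k x -> inI k y -> x < y -> F x < F y.
Proof.
move=> kg Ix Iy xy.
have It t : t \in `[x, y] -> inI k t.
  by rewrite in_itv /= => h; apply: (inI_mid Ix Iy h).
pose df t := Wp.[t] / Lp.[t] ^+ 2.
have D t : t \in `[x, y] -> is_derive t 1 F (df t).
  move=> /It /(inI_L kg) L0.
  have h3 := is_deriveM (is_derive_poly Tp t) (is_deriveV L0 (is_derive_poly Lp t)).
  have -> : F = (horner Tp * (fun y => (Lp.[y])^-1)).
    by apply/funext => u; rewrite /F.
  apply: (trigger_derive h3); rewrite /df /Wp hornerD hornerN !hornerM /=.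
  rewrite /GRing.scale /=; field; exact: L0.
have [c cI e] := MVT xy (fun t tI => D t (subset_itv_oo_cc tI))
  (derivable_within_continuous (fun t tI => let: DeriveDef h _ := D t tI in h)).
have : 0 < F y - F x.
  rewrite e; apply: mulr_gt0; last by rewrite subr_gt0.
  apply: divr_gt0; first exact: W_pos.
  rewrite exprn_even_gt0 //; apply: (inI_L kg); apply: It.
  exact: subset_itv_oo_cc.
by rewrite subr_gt0.
Qed.
Lemma root_F {v x} : (Pv v).[x] = 0 -> Lp.[x] != 0 -> F x = - v / 12.
Proof.
move=> r L0; move: r; rewrite /Pv hornerD !hornerZ /F => /eqP.
rewrite addr_eq0 => /eqP e; apply/eqP; rewrite eqr_div // ?twelve_neq0 //.
by rewrite mulrC e mulNr mulrC.
Qed.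

Lemma root_in {v x} : (Pv v).[x] = 0 -> exists2 k, (k <= g)%N & inI k x.
Proof.
move=> rx.
have ex : exists n, (n <= g)%N && ((n == 0%N) || (lam n < x)) by exists 0%N.
have bd : forall n, (n <= g)%N && ((n == 0%N) || (lam n < x)) -> (n <= g)%N.
  by move=> n /andP[].
case: (ex_maxnP ex bd) => k /andP[kg Pk] mk.
exists k => //; apply/andP; split => //.
case: (leqP g k) => //= kg'.
rewrite ltNge le_eqVlt negb_or; apply/andP; split.
  apply/eqP => xe; move: rx; rewrite -xe /Pv hornerD !hornerZ L_root; last by lia.
  rewrite mulr0 addr0 => /eqP; rewrite mulf_eq0 (negbTE twelve_neq0) /= => /eqP T0.
  have := @T_sign k.+1 ltac:(lia); by rewrite T0 mulr0 ltxx.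
apply/negP => h; have := mk k.+1; rewrite kg' h orbT => /(_ isT); lia.
Qed.

Lemma root_uniq {v k x y} : (k <= g)%N -> inI k x -> inI k y ->
  (Pv v).[x] = 0 -> (Pv v).[y] = 0 -> x = y.
Proof.
move=> kg Ix Iy rx ry.
have Fx := root_F rx (inI_L kg Ix); have Fy := root_F ry (inI_L kg Iy).
case: (ltrgtP x y) => // xy.
  by have := F_incr kg Ix Iy xy; rewrite Fx Fy ltxx.
by have := F_incr kg Iy Ix xy; rewrite Fx Fy ltxx.
Qed.

Definition zz k v := xget 0 [set x | inI k x /\ (Pv v).[x] = 0].

Lemma zz_spec {k} v : (k <= g)%N -> inI k (zz k v) /\ (Pv v).[zz k v] = 0.
Proof. by move=> kg; exact: (xgetPex 0 (@root_exists v k kg)). Qed.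

Lemma zz_le {k v s} : (k <= g)%N -> inI k s -> zz k v <= s -> - 12 * F s <= v.
Proof.
move=> kg Is zs; have [Iz rz] := zz_spec v kg.
have Fz := root_F rz (inI_L kg Iz).
have : F (zz k v) <= F s.
  move: zs; rewrite le_eqVlt => /orP[/eqP ->//|zs].
  exact/ltW/(F_incr kg Iz Is zs).
rewrite Fz => h.
have : - v <= 12 * F s by rewrite -ler_pdivrMl // mulrC.
by rewrite mulNr lerNl.
Qed.

Lemma zz_ge {k v s} : (k <= g)%N -> inI k s -> s <= zz k v -> v <= - 12 * F s.
Proof.
move=> kg Is zs; have [Iz rz] := zz_spec v kg.
have Fz := root_F rz (inI_L kg Iz).
have : F s <= F (zz k v).
  move: zs; rewrite le_eqVlt => /orP[/eqP ->//|zs].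
  exact/ltW/(F_incr kg Is Iz zs).
rewrite Fz => h.
have : 12 * F s <= - v by rewrite -ler_pdivlMl // mulrC.
by rewrite mulNr lerNr.
Qed.
Lemma F_zz k v : (k <= g)%N -> - 12 * F (zz k v) = v.
Proof.
move=> kg; have [Iz rz] := zz_spec v kg; rewrite (root_F rz (inI_L kg Iz)).
by field.
Qed.

Lemma main_sec : exists z : nat -> R -> R,
    [/\ forall v x, statpoly g lam tlam v x = 0 <-> exists2 j, (j <= g)%N & x = z j v,
        (forall v j, (1 <= j <= g)%N -> lam j < z j v) /\
        (forall v j, (j < g)%N -> z j v < lam j.+1),
        forall v j, (1 <= j <= g)%N ->
          exists2 k, (k <= g)%N & E (2 * j).-1 < z k v < E (2 * j)%N,
        forall j v1 v2, (j <= g)%N -> v1 < v2 -> z j v2 < z j v1 &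
        [/\ forall j, (j < g)%N -> z j v @[v --> -oo] --> lam j.+1,
            z g v @[v --> -oo] --> +oo,
            forall j, (1 <= j <= g)%N -> z j v @[v --> +oo] --> lam j
          & z 0%N v @[v --> +oo] --> -oo]].
Proof.
exists zz; split.
- move=> v x; rewrite -horner_Pv; split.
    move=> rx; have [k kg Ik] := root_in rx; exists k => //.
    have [Iz rz] := zz_spec v kg; exact: (root_uniq kg Ik Iz rx rz).
  by move=> [j jg ->]; have [_ rz] := zz_spec v jg.
- split => v j jI.
    have jg : (j <= g)%N by lia.
    have [/andP[h _] _] := zz_spec v jg; move: h.
    by rewrite (_ : (j == 0%N) = false) //; apply/negbTE; lia.
  have [/andP[_ h] _] := zz_spec v (ltnW jI); move: h.
  by rewrite leqNgt jI.
- move=> v j jg; have [y gy ry] := GapRoot (pen_Pv v) (Pv_neq0 v) jg.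
  have [k kg Ik] := root_in ry; exists k => //.
  have [Iz rz] := zz_spec v kg; by rewrite -(root_uniq kg Ik Iz ry rz).
- move=> j v1 v2 jg v12; rewrite ltNge; apply/negP => h.
  have [Iz rz] := zz_spec v2 jg.
  have := zz_le jg Iz h; rewrite F_zz // => h2.
  by move: v12; rewrite ltNge h2.
split.
- move=> j jg; apply/cvgrPdist_lt => eps e0.
  have jg' := ltnW jg.
  have [/andP[h1 h2] _] := zz_spec 0 jg'.
  move: h2; rewrite leqNgt jg /= => h2.
  set s := Num.max (lam j.+1 - eps / 2) (zz j 0).
  have Is : inI j s.
    apply/andP; split; last by rewrite leqNgt jg /= gt_max h2 andbT; lra.
    case/orP: h1 => [->//|h]; apply/orP; right; apply: (lt_le_trans h).
    by rewrite le_max lexx orbT.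
  exists (-12 * F s); split; first exact: num_real.
  move=> v hv.
  have zs : s < zz j v.
    rewrite ltNge; apply/negP => h; have := zz_le jg' Is h.
    by rewrite leNgt hv.
  have [/andP[_ h3] _] := zz_spec v jg'; move: h3; rewrite leqNgt jg /= => h3.
  have sl : lam j.+1 - eps / 2 <= s by rewrite le_max lexx.
  rewrite ger0_norm; last by rewrite subr_ge0 ltW.
  lra.
- apply/cvgryPge => A.
  have gg := leqnn g.
  have [/andP[h1 _] _] := zz_spec 0 gg.
  set s := Num.max A (zz g 0).
  have Is : inI g s.
    apply/andP; split; last by rewrite leqnn.
    case/orP: h1 => [->//|h]; apply/orP; right; apply: (lt_le_trans h).
    by rewrite le_max lexx orbT.
  exists (-12 * F s); split; first exact: num_real.
  move=> v hv.
  have zs : s < zz g v.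
    rewrite ltNge; apply/negP => h; have := zz_le gg Is h.
    by rewrite leNgt hv.
  apply/ltW/(le_lt_trans _ zs); by rewrite le_max lexx.
- move=> j jI; apply/cvgrPdist_lt => eps e0.
  have jg : (j <= g)%N by lia.
  have [/andP[h1 h2] _] := zz_spec 0 jg.
  move: h1; rewrite (_ : (j == 0%N) = false) /=; last by apply/negbTE; lia.
  move=> h1.
  set s := Num.min (lam j + eps / 2) (zz j 0).
  have Is : inI j s.
    apply/andP; split.
      by rewrite (_ : (j == 0%N) = false) /=; [rewrite lt_min h1 andbT; lra|apply/negbTE; lia].
    case/orP: h2 => [->//|h]; apply/orP; right; apply: (le_lt_trans _ h).
    by rewrite ge_min lexx orbT.
  exists (-12 * F s); split; first exact: num_real.
  move=> v hv.
  have zs : zz j v < s.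
    rewrite ltNge; apply/negP => h; have := zz_ge jg Is h.
    by rewrite leNgt hv.
  have [/andP[h3 _] _] := zz_spec v jg.
  move: h3; rewrite (_ : (j == 0%N) = false) /=; last by apply/negbTE; lia.
  move=> h3.
  have sl : s <= lam j + eps / 2 by rewrite ge_min lexx.
  rewrite ler0_norm; last by rewrite subr_le0 ltW.
  lra.
- apply/cvgrNyPle => A.
  have g0 := leq0n g.
  have [/andP[_ h2] _] := zz_spec 0 g0.
  set s := Num.min A (zz 0 0).
  have Is : inI 0 s.
    apply/andP; split => //.
    case/orP: h2 => [->//|h]; apply/orP; right; apply: (le_lt_trans _ h).
    by rewrite ge_min lexx orbT.
  exists (-12 * F s); split; first exact: num_real.
  move=> v hv.
  have zs : zz 0 v < s.
    rewrite ltNge; apply/negP => h; have := zz_ge g0 Is h.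
    by rewrite leNgt hv.
  apply/ltW/(lt_le_trans zs); by rewrite ge_min lexx.
Qed.
End Main.

Theorem lemma5p1 (R : realType) (g : nat) (E lam tlam : nat -> R) :
  (forall i, (i < 2 * g)%N -> E i < E i.+1) ->
  lambdas_def g E lam tlam ->
  (* facts recorded in the context: lambda_j, tlambda_j (j >= 1) lie in the j-th gap *)
  (forall j, (1 <= j <= g)%N ->
     E (2 * j).-1 < lam j < E (2 * j)%N /\ E (2 * j).-1 < tlam j < E (2 * j)%N) ->
  exists z : nat -> R -> R,
    [/\ (* the z_j(v), 0 <= j <= g, are exactly the zeros of the polynomial *)
        forall v x, statpoly g lam tlam v x = 0 <-> exists2 j, (j <= g)%N & x = z j v,
        (* lambda_j < z_j(v) < lambda_{j+1}, with lambda_0 = -oo, lambda_{g+1} = +oo *)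
        (forall v j, (1 <= j <= g)%N -> lam j < z j v) /\
        (forall v j, (j < g)%N -> z j v < lam j.+1),
        (* at least one stationary phase point in each spectral gap *)
        forall v j, (1 <= j <= g)%N ->
          exists2 k, (k <= g)%N & E (2 * j).-1 < z k v < E (2 * j)%N,
        (* each z_j strictly decreasing in v *)
        forall j v1 v2, (j <= g)%N -> v1 < v2 -> z j v2 < z j v1 &
        (* limits *)
        [/\ forall j, (j < g)%N -> z j v @[v --> -oo] --> lam j.+1,
            z g v @[v --> -oo] --> +oo,
            forall j, (1 <= j <= g)%N -> z j v @[v --> +oo] --> lam j
          & z 0%N v @[v --> +oo] --> -oo]].
Proof.
move=> HE Hdef Hgap; exact: (@main_sec R g E lam tlam HE Hdef Hgap).
Qed.
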